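(* Let $G=(V,E)$ be a $2$-uniform directed hypergraph with unit edge weights and no loops, containing both undirected edges $\{u,v\}$ (with, say, $T(e)=e$, $H(e)=\emptyset$) and directed edges $(u,v)$ (with $T(e)=\{u\}$, $H(e)=\{v\}$), and such that any unordered pair of distinct nodes is contained in at most one edge. Let $q\in\mathbb R$. Equip $G$ with the directed hypergraph cellular sheaf of stalk dimension $d=1$ and charge $q$ with $\mathcal F_{u\trianglelefteq e}=\mathcal F_{v\trianglelefteq e}=\sqrt2$ for every undirected edge $e=\{u,v\}$ and $\mathcal F_{u\trianglelefteq e}=\mathcal F_{v\trianglelefteq e}=1$ for every directed edge $e=(u,v)$. Then $L^{\vec{\mathcal F}}=L^{(q)}$, the Magnetic Laplacian of $G$. In particular, for $q=\tfrac14$, $L^{\vec{\mathcal F}}$ equals the Sign-Magnetic Laplacian of $G$.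
   Context: A directed hypergraph is $\mathcal H=(V,E)$ with $n=|V|$, $m=|E|$, each hyperedge $e\in E$ a nonempty subset of $V$ partitioned into disjoint sets $T(e)$ (tail) and $H(e)$ (head) with $e=T(e)\cup H(e)$; $\delta_e:=|e|$. A directed hypergraph cellular sheaf with charge $q\in\mathbb R$ and stalk dimension $d$ consists of: for each $e\in E$, $u\in V$, the scalar $\mathcal S^{(q)}_{u\trianglelefteq e}=1$ if $u\in H(e)$, $=e^{-2\pi\mathbf i q}$ if $u\in T(e)$, $=0$ otherwise; for each incidence $u\in e$ a real matrix $\mathcal F_{u\trianglelefteq e}\in\mathbb R^{d\times d}$ and $\vec{\mathcal F}_{u\trianglelefteq e}:=\mathcal S^{(q)}_{u\trianglelefteq e}\mathcal F_{u\trianglelefteq e}$. Let $B^{(q)}\in\mathbb C^{md\times nd}$ have $d\times d$ block $(e,u)$ equal to $\vec{\mathcal F}_{u\trianglelefteq e}$ if $u\in e$ and $0$ otherwise; $D_E=\mathrm{diag}(\delta_1I_d,\dots,\delta_mI_d)$; $D_u:=\sum_{e\ni u}\mathcal F_{u\trianglelefteq e}^\top\mathcal F_{u\trianglelefteq e}$; $D_V=\mathrm{diag}(D_1,\dots,D_n)$; $L^{\vec{\mathcal F}}:=D_V-(B^{(q)})^\dagger D_E^{-1}B^{(q)}$. Magnetic Laplacian: let $A\in\{0,1\}^{n\times n}$ with $A_{uv}=A_{vu}=1$ for each undirected edge $\{u,v\}$, $A_{uv}=1$ for each directed edge $(u,v)$, and $0$ otherwise; $A_s:=\tfrac12(A+A^\top)$;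 $D_s$ diagonal with $(D_s)_{uu}=\sum_v(A_s)_{uv}$; $\Theta^{(q)}:=2\pi q(A-A^\top)$; $H^{(q)}:=A_s\odot\exp(\mathbf i\Theta^{(q)})$ (entrywise product and entrywise exponential); $L^{(q)}:=D_s-H^{(q)}$. For unit-weight graphs of this type the Sign-Magnetic Laplacian coincides with $L^{(1/4)}$. *)

(* Defs.v *)
From HB Require Import structures.
From mathcomp Require Import all_boot all_order all_algebra.
From mathcomp Require Import complex.
From mathcomp Require Import reals trigo.
Set Implicit Arguments. Unset Strict Implicit. Unset Printing Implicit Defensive.
Import Order.TTheory GRing.Theory Num.Theory.
Local Open Scope ring_scope.
Local Open Scope complex_scope.

Section Defs.
Variable R : realType.
Local Notation C := R[i].

Definition expi (th : R) : C := (cos th +i* sin th).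

Definition adjmx (p k : nat) (M : 'M[C]_(p, k)) : 'M[C]_(k, p) :=
  (map_mx conjc M)^T.

(* A directed hypergraph on vertices 'I_n with edges 'I_m is given by
   tail sets T e and head sets Hd e (disjoint, union nonempty). *)
Definition edge (n m : nat) (T Hd : 'I_m -> {set 'I_n}) (e : 'I_m) :
  {set 'I_n} := T e :|: Hd e.

Definition is_dhypergraph (n m : nat) (T Hd : 'I_m -> {set 'I_n}) : Prop :=
  forall e, T e :&: Hd e = set0 /\ edge T Hd e != set0.

Definition Sq (n m : nat) (T Hd : 'I_m -> {set 'I_n}) (q : R)
  (e : 'I_m) (u : 'I_n) : C :=
  if u \in Hd e then 1
  else if u \in T e then expi (- (2 * pi * q))
  else 0.

(* Stalk dimension d = 1: restriction maps are scalars F e u = F_{u <| e}. *)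
Definition Bq (n m : nat) (T Hd : 'I_m -> {set 'I_n}) (F : 'I_m -> 'I_n -> R)
  (q : R) : 'M[C]_(m, n) :=
  \matrix_(e, u) (if u \in edge T Hd e then Sq T Hd q e u * (F e u)%:C else 0).

Definition DE (n m : nat) (T Hd : 'I_m -> {set 'I_n}) : 'M[C]_m :=
  diag_mx (\row_e (#|edge T Hd e|%:R : C)).

Definition DV (n m : nat) (T Hd : 'I_m -> {set 'I_n}) (F : 'I_m -> 'I_n -> R)
  : 'M[C]_n :=
  diag_mx (\row_u ((\sum_(e | u \in edge T Hd e) F e u * F e u)%:C)).

Definition sheafLaplacian (n m : nat) (T Hd : 'I_m -> {set 'I_n})
  (F : 'I_m -> 'I_n -> R) (q : R) : 'M[C]_n :=
  DV T Hd F - adjmx (Bq T Hd F q) *m invmx (DE T Hd) *m Bq T Hd F q.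

Definition is_undirected_edge (n m : nat) (T Hd : 'I_m -> {set 'I_n})
  (e : 'I_m) (u v : 'I_n) : bool :=
  (u != v) && (T e == [set u; v]) && (Hd e == set0).

Definition is_directed_edge (n m : nat) (T Hd : 'I_m -> {set 'I_n})
  (e : 'I_m) (u v : 'I_n) : bool :=
  (u != v) && (T e == [set u]) && (Hd e == [set v]).

Definition adjA (n m : nat) (T Hd : 'I_m -> {set 'I_n}) : 'M[R]_n :=
  \matrix_(u, v) (if [exists e, is_undirected_edge T Hd e u v
                             || is_directed_edge T Hd e u v] then 1 else 0).

Definition symA (n m : nat) (T Hd : 'I_m -> {set 'I_n}) : 'M[R]_n :=
  2^-1 *: (adjA T Hd + (adjA T Hd)^T).

Definition degS (n m : nat) (T Hd : 'I_m -> {set 'I_n}) : 'M[R]_n :=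
  diag_mx (\row_u (\sum_v symA T Hd u v)).

Definition Theta (n m : nat) (T Hd : 'I_m -> {set 'I_n}) (q : R) : 'M[R]_n :=
  (2 * pi * q) *: (adjA T Hd - (adjA T Hd)^T).

Definition Hq (n m : nat) (T Hd : 'I_m -> {set 'I_n}) (q : R) : 'M[C]_n :=
  \matrix_(u, v) ((symA T Hd u v)%:C * expi (Theta T Hd q u v)).

Definition magneticLaplacian (n m : nat) (T Hd : 'I_m -> {set 'I_n}) (q : R)
  : 'M[C]_n :=
  map_mx (fun x : R => x%:C) (degS T Hd) - Hq T Hd q.

End Defs.

(* Main.v *)
Require Import Defs.
From HB Require Import structures.
From mathcomp Require Import all_boot all_order all_algebra.
From mathcomp Require Import complex.
From mathcomp Require Import reals trigo.
From mathcomp Require Import ring lra.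
Import Order.TTheory GRing.Theory Num.Theory.
Local Open Scope ring_scope.

Lemma expiJ (R : realType) (t : R) : (expi t)^* = expi (- t).
Proof. by rewrite /expi /= cosN sinN. Qed.
Lemma expiJK (R : realType) (t : R) : (expi t)^* * expi t = 1.
Proof. rewrite /expi /=. apply/eqP; rewrite eq_complex /=. apply/andP; split; apply/eqP.
 by rewrite mulNr opprK -!expr2 cos2Dsin2. by rewrite mulNr mulrC subrr. Qed.
Lemma conjR (R : realType) (r : R) : ((r%:C)%C)^* = r%:C%C.
Proof. by apply/eqP; rewrite eq_complex /= oppr0 !eqxx. Qed.
Lemma conjMR (R : realType) (z : R[i]) (r : R) : (z * (r%:C)%C)^* = z^* * r%:C%C.
Proof. case: z => a b; apply/eqP; rewrite eq_complex /= !mulr0 !subr0 !add0r mulNr !eqxx. done. Qed.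
Lemma mulRC (R : realType) (r s : R) : (r%:C)%C * (s%:C)%C = ((r * s)%:C)%C.
Proof. by apply/eqP; rewrite eq_complex /= !mulr0 !mul0r subr0 addr0 !eqxx. Qed.
Lemma twoC (R : realType) : ((2%:R : R)%:C)%C = 2%:R.
Proof. by apply/eqP; rewrite eq_complex /= addr0 !eqxx. Qed.
Lemma oneC (R : realType) : ((1 : R)%:C)%C = 1.
Proof. by []. Qed.
Lemma half2' (K : fieldType) (h : (2%:R : K) != 0) : 2^-1 * 2%:R = 1 :> K.
Proof. by rewrite mulVf. Qed.
Lemma halfC (R : realType) : (((2%:R : R)^-1)%:C)%C = 2%:R^-1.
Proof. by rewrite fmorphV /= twoC. Qed.
Lemma conjcE (R : realType) (z : R[i]) : (z^*)%C = z^*.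
Proof. by []. Qed.
Lemma zeroC (R : realType) : ((0 : R)%:C)%C = 0.
Proof. by []. Qed.
Lemma sumC (R : realType) (I : finType) (P : pred I) (f : I -> R) :
  ((\sum_(i | P i) f i)%:C)%C = \sum_(i | P i) (f i)%:C%C.
Proof. apply: (big_morph (fun r => r%:C%C)) => // a b; by apply/eqP; rewrite eq_complex /= addr0 !eqxx. Qed.
Lemma subRC (R : realType) (a b : R) : (a%:C)%C - (b%:C)%C = ((a - b)%:C)%C.
Proof. by apply/eqP; rewrite eq_complex /= subr0 !eqxx. Qed.
Lemma expi0 (R : realType) : expi (0 : R) = 1.
Proof. by rewrite /expi cos0 sin0. Qed.
Lemma half2 (K : fieldType) (h : (2%:R : K) != 0) : 2^-1 * (1 + 1) = 1 :> K.
Proof. by rewrite -[1 + 1]/(2%:R) mulVf. Qed.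

Theorem theorem5 (R : realType) (n m : nat)
  (T Hd : 'I_m -> {set 'I_n}) (F : 'I_m -> 'I_n -> R) (q : R) :
  is_dhypergraph T Hd ->
  (forall e : 'I_m, exists u v : 'I_n,
      is_undirected_edge T Hd e u v || is_directed_edge T Hd e u v) ->
  (forall (e1 e2 : 'I_m) (u v : 'I_n), u != v ->
      u \in edge T Hd e1 -> v \in edge T Hd e1 ->
      u \in edge T Hd e2 -> v \in edge T Hd e2 -> e1 = e2) ->
  (forall (e : 'I_m) (u v w : 'I_n), is_undirected_edge T Hd e u v ->
      w \in edge T Hd e -> F e w = Num.sqrt 2) ->
  (forall (e : 'I_m) (u v w : 'I_n), is_directed_edge T Hd e u v ->
      w \in edge T Hd e -> F e w = 1) ->
  sheafLaplacian T Hd F q = magneticLaplacian T Hd q.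
Proof.
move=> Hg Hty Huniq HFu HFd.
set B := Bq T Hd F q.
have card2 : forall e, #|edge T Hd e| = 2%N.
  move=> e; have [u [v /orP[/andP[/andP[uv /eqP HT] /eqP HH]|/andP[/andP[uv /eqP HT] /eqP HH]]]] := Hty e;
  by rewrite /edge HT HH ?setU0 cards2 uv.
have DE2 : DE R T Hd = 2%:M.
  apply/matrixP => i j; rewrite !mxE card2 //.
have inUnd : forall e x y, is_undirected_edge T Hd e x y -> (x \in edge T Hd e) && (y \in edge T Hd e).
  by move=> e x y /andP[/andP[_ /eqP HT] _]; rewrite /edge HT !inE !eqxx orbT.
have inDir : forall e x y, is_directed_edge T Hd e x y -> (x \in edge T Hd e) && (y \in edge T Hd e).
  by move=> e x y /andP[/andP[_ /eqP HT] /eqP HH]; rewrite /edge HT HH !inE !eqxx orbT.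
have info : forall e, exists u v, [/\ u != v, edge T Hd e = [set u; v] &
   ((T e = [set u; v] /\ Hd e = set0 /\ forall w, w \in edge T Hd e -> F e w = Num.sqrt 2) \/
    (T e = [set u] /\ Hd e = [set v] /\ forall w, w \in edge T Hd e -> F e w = 1))].
  move=> e; have [u [v /orP[Hu|Hd']]] := Hty e; exists u, v.
    move: (Hu) => /andP[/andP[uv /eqP HT] /eqP HH].
    split => //; first by rewrite /edge HT HH setU0.
    by left; split => //; split => // w; apply: HFu Hu.
  move: (Hd') => /andP[/andP[uv /eqP HT] /eqP HH].
  split => //; first by rewrite /edge HT HH.
  by right; split => //; split => // w; apply: HFd Hd'.
have s1 : forall a b : 'I_n, ([set a] == [set b]) = (a == b).
  move=> a b; apply/eqP/eqP => [/setP/(_ a)|->//]; rewrite !inE eqxx => /esym/eqP //.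
have s0 : forall a : 'I_n, ([set a] == set0) = false.
  by move=> a; apply/eqP => /setP/(_ a); rewrite !inE eqxx.
have s0' : forall a : 'I_n, (set0 == [set a]) = false.
  by move=> a; rewrite eq_sym s0.
have exU : forall (P : pred 'I_m) e0, (forall e, P e -> e = e0) -> [exists e, P e] = P e0.
  move=> P e0 HP; apply/existsP/idP => [[e /[dup] Pe /HP <-]//|]; by exists e0.
have adjE : forall x y e, x != y -> x \in edge T Hd e -> y \in edge T Hd e ->
   [exists e', is_undirected_edge T Hd e' x y || is_directed_edge T Hd e' x y] = (is_undirected_edge T Hd e x y || is_directed_edge T Hd e x y).
  move=> x y e xy xe ye; rewrite (exU _ e) // => e' /orP[/inUnd|/inDir] /andP[xe' ye'];
  exact: (Huniq e' e x y).
have ss : Num.sqrt 2 * Num.sqrt 2 = 2 :> R by rewrite -expr2 sqr_sqrtr // ler0n.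
have key : forall x y e, x != y -> x \in edge T Hd e -> y \in edge T Hd e ->
   symA R T Hd x y = 2^-1 * (F e x * F e x) /\
   Hq T Hd q x y = 2^-1 * ((B e x)^* * B e y).
  move=> x y e xy xe ye.
  have yx : y != x by rewrite eq_sym.
  rewrite /symA /Hq /Theta !mxE (adjE x y e) // (adjE y x e) //.
  rewrite xe ye /Sq /is_undirected_edge /is_directed_edge xy yx.
  have [u [v [uv Hedge [[HT [HH HF]]|[HT [HH HF]]]]]] := info e; rewrite HF // HF //.
    have sUC : [set v; u] = [set u; v] by rewrite setUC.
    have vu : v != u by rewrite eq_sym.
    move: xe ye xy yx; rewrite Hedge !inE HT HH => /orP[]/eqP-> /orP[]/eqP->; rewrite ?eqxx //= => _ _;
      rewrite ?sUC ?s0 ?s0' ?s1 !inE ?eqxx ?(negbTE uv) ?(negbTE vu) ?orbT /=;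
      (split; [by rewrite ss half2 // pnatr_eq0 |]);
      rewrite subrr mulr0 expi0 mulr1 half2 ?pnatr_eq0 // conjMR mulrACA expiJK mul1r mulRC ss twoC half2' ?pnatr_eq0 // oneC.
  have vu : v != u by rewrite eq_sym.
  move: xe ye xy yx; rewrite Hedge !inE HT HH => /orP[]/eqP-> /orP[]/eqP->; rewrite ?eqxx //= => _ _;
      rewrite ?s0 ?s0' ?s1 !inE ?eqxx ?(negbTE uv) ?(negbTE vu) ?orbT ?andbF /=;
    (split; [by rewrite ?addr0 ?add0r mulr1 |]);
    rewrite oneC ?addr0 ?add0r ?subr0 ?sub0r ?mulrN1 !mulr1 ?mul1r ?expiJ ?opprK ?conjC1 ?mul1r halfC //.
have exF : forall x y, (forall e, ~~ ((x \in edge T Hd e) && (y \in edge T Hd e))) ->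
    [exists e, is_undirected_edge T Hd e x y || is_directed_edge T Hd e x y] = false.
  move=> x y Hn; apply/existsP => -[e /orP[/inUnd|/inDir] H]; by move: (Hn e); rewrite H.
have exD : forall x, [exists e, is_undirected_edge T Hd e x x || is_directed_edge T Hd e x x] = false.
  by move=> x; apply/existsP => -[e]; rewrite /is_undirected_edge /is_directed_edge eqxx.
have key0 : forall x y, (forall e, ~~ ((x \in edge T Hd e) && (y \in edge T Hd e))) ->
   symA R T Hd x y = 0 /\ Hq T Hd q x y = 0.
  move=> x y Hn; have Hn' : forall e, ~~ ((y \in edge T Hd e) && (x \in edge T Hd e)).
    by move=> e; rewrite andbC.
  rewrite /symA /Hq /Theta !mxE (exF x y) // (exF y x) // addr0 mulr0; split => //.
  by rewrite mul0r.
have diag0 : forall x, symA R T Hd x x = 0 /\ Hq T Hd q x x = 0.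
  move=> x; rewrite /symA /Hq /Theta !mxE exD addr0 mulr0; split => //.
  by rewrite mul0r.
have Bt0 : forall e x y, ~~ ((x \in edge T Hd e) && (y \in edge T Hd e)) -> (B e x)^* * B e y = 0.
  move=> e x y; rewrite /B !mxE; case: (x \in edge T Hd e) => /=; first by move/negbTE->; rewrite mulr0.
  by rewrite conjC0 mul0r.
have BtD : forall e x, x \in edge T Hd e -> (B e x)^* * B e x = ((F e x * F e x)%:C)%C.
  move=> e x xe; rewrite /B !mxE xe conjMR mulrACA mulRC; rewrite /Sq.
  case: ifP => [xH|xH]; first by rewrite conjC1 !mul1r.
  case: ifP => [xT|xT]; first by rewrite expiJK mul1r.
  by move: xe; rewrite /edge inE xT xH.
have symS : forall x y, symA R T Hd x y = \sum_e (if (x != y) && (x \in edge T Hd e) && (y \in edge T Hd e) then 2^-1 * (F e x * F e x) else 0).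
  move=> x y; case: (eqVneq x y) => [->|xy].
    by rewrite (proj1 (diag0 y)) big1.
  case: (pickP (fun e => (x \in edge T Hd e) && (y \in edge T Hd e))) => [e0 /andP[xe ye]| Hn].
    rewrite (proj1 (key x y e0 xy xe ye)) (bigD1 e0) //= xe ye /= big1 ?addr0 // => e ne.
    case: ifP => // /andP[xe' ye']; by move: ne; rewrite (Huniq e e0 x y) ?eqxx.
  have [-> _] := key0 x y (fun e => negbT (Hn e)).
  by rewrite big1 // => e; rewrite -andbA (Hn e) andbF.
have HqS : forall x y, x != y -> Hq T Hd q x y = 2^-1 * \sum_e (B e x)^* * B e y.
  move=> x y xy.
  case: (pickP (fun e => (x \in edge T Hd e) && (y \in edge T Hd e))) => [e0 /andP[xe ye]| Hn].
    rewrite (proj2 (key x y e0 xy xe ye)) (bigD1 e0) //= big1 ?addr0 // => e ne.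
    apply: Bt0; apply/negP => /andP[xe' ye']; by move: ne; rewrite (Huniq e e0 x y) ?eqxx.
  have [_ ->] := key0 x y (fun e => negbT (Hn e)).
  by rewrite big1 ?mulr0 // => e _; rewrite Bt0 // Hn.
rewrite /sheafLaplacian -/B DE2 invmx_scalar mul_mx_scalar -scalemxAl.
clearbody B.
apply/matrixP => x y; rewrite mxE [RHS]mxE [X in _ + X = _]mxE [X in _ = _ + X]mxE [X in - X]mxE.
rewrite [(adjmx B *m B) x y]mxE.
under eq_bigr => j _ do rewrite /adjmx !mxE conjcE.
rewrite /DV [X in X - _]mxE.
rewrite [X in _ = X - _]mxE /degS [diag_mx _ x y]mxE ![(\row_u _) 0 x]mxE.
case: (eqVneq x y) => [<-|xy]; last by rewrite !mulr0n zeroC HqS // !sub0r.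
rewrite !mulr1n (proj2 (diag0 x)) subr0.
have -> : \sum_j (B j x)^* * B j x = \sum_(j | x \in edge T Hd j) ((F j x * F j x)%:C)%C.
  rewrite [RHS]big_mkcond /=; apply: eq_bigr => j _; case: ifP => [xe|xe]; first by rewrite BtD.
  by rewrite Bt0 // xe.
have -> : \sum_v symA R T Hd x v = 2^-1 * \sum_(e | x \in edge T Hd e) F e x * F e x.
  under eq_bigr => v _ do rewrite symS.
  rewrite exchange_big mulr_sumr [RHS]big_mkcond /=; apply: eq_bigr => e _.
  case: ifP => xe; last by rewrite big1 // => v _; rewrite andbF.
  have [u [w [uw Hedge _]]] := info e.
  have [z [xz ze Hz]] : exists z, [/\ x != z, z \in edge T Hd e & forall v, v \in edge T Hd e -> x != v -> v = z].
    move: xe; rewrite Hedge !inE => /orP[]/eqP->.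
      exists w; split; rewrite ?inE ?eqxx ?orbT // => v; rewrite !inE => /orP[]/eqP-> //; by rewrite eqxx.
    exists u; split; rewrite ?inE ?eqxx ?orbT 1?eq_sym // => v; rewrite !inE => /orP[]/eqP-> //; by rewrite eqxx.
  rewrite (bigD1 z) //= xz ze big1 ?addr0 // => v vz.
  case: ifP => // /andP[/andP[xv _] ve]; by move: vz; rewrite (Hz v ve xv) eqxx.
rewrite -sumC -halfC mulRC subRC; congr (_%:C)%C.
set S := \sum_(_ | _) _; lra.
Qed.
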